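(* $\mathbf\Delta$ is an open subset of $\mathcal P(\mathcal H)\times\mathcal P(\mathcal H)$ (for the operator norm topology); in particular $\mathbf\Delta$ is a submanifold of $\mathcal P(\mathcal H)\times\mathcal P(\mathcal H)$.
   Context: $\mathcal H$ is a separable infinite-dimensional complex Hilbert space, $\mathcal B(\mathcal H)$ the bounded operators, $\mathcal P(\mathcal H)=\{P\in\mathcal B(\mathcal H):P=P^2=P^*\}$ with the norm topology (a $C^\infty$ submanifold of $\mathcal B(\mathcal H)$). For a closed subspace $\mathcal S$, $P_{\mathcal S}$ denotes the orthogonal projection onto $\mathcal S$. Two closed subspaces $\mathcal S,\mathcal T$ have a common complement if there is a closed subspace $\mathcal Z$ with $\mathcal S\cap\mathcal Z=\mathcal T\cap\mathcal Z=\{0\}$ and $\mathcal S+\mathcal Z=\mathcal T+\mathcal Z=\mathcal H$. $\mathbf\Delta=\{(P_{\mathcal S},P_{\mathcal T})\in\mathcal P(\mathcal H)\times\mathcal P(\mathcal H):\mathcal S,\mathcal T\text{ have a common complement}\}$. *)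

(* Defs.v *)
From HB Require Import structures.
From mathcomp Require Import all_boot all_order all_algebra.
From mathcomp Require Import complex.
From mathcomp Require Import boolp classical_sets reals.
Set Implicit Arguments. Unset Strict Implicit. Unset Printing Implicit Defensive.
Import Order.TTheory GRing.Theory Num.Theory.
Local Open Scope ring_scope.
Local Open Scope classical_set_scope.

Section Hilbert.
Variable R : realType.
Local Notation C := R[i].
Variable H : lmodType C.
Variable ip : H -> H -> C.

Definition hnorm (x : H) : R := Num.sqrt (complex.Re (ip x x)).

Definition is_inner_product : Prop :=
  [/\ (forall (a : C) (x y z : H), ip (a *: x + y) z = a * ip x z + ip y z),
      (forall x y : H, ip y x = conjc (ip x y)),
      (forall x : H, 0 <= ip x x) &
      (forall x : H, ip x x = 0 -> x = 0)].

Definition hconverges (u : nat -> H) (l : H) : Prop :=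
  forall eps : R, 0 < eps -> exists N, forall n, (N <= n)%N -> hnorm (u n - l) < eps.

Definition hcauchy (u : nat -> H) : Prop :=
  forall eps : R, 0 < eps ->
    exists N, forall n m, (N <= n)%N -> (N <= m)%N -> hnorm (u n - u m) < eps.

Definition hcomplete : Prop :=
  forall u : nat -> H, hcauchy u -> exists l, hconverges u l.

Definition hseparable : Prop :=
  exists d : nat -> H, forall (x : H) (eps : R), 0 < eps ->
    exists n, hnorm (x - d n) < eps.

Definition hinfinite_dim : Prop :=
  forall s : seq H, exists x : H,
    ~ exists c : 'I_(size s) -> C, x = \sum_(i < size s) c i *: s`_i.

Definition separable_inf_dim_hilbert : Prop :=
  [/\ is_inner_product, hcomplete, hseparable & hinfinite_dim].

Definition bounded_op (T : H -> H) : Prop :=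
  (forall (a : C) (x y : H), T (a *: x + y) = a *: T x + T y) /\
  (exists M : R, forall x, hnorm (T x) <= M * hnorm x).

Definition opnorm (T : H -> H) : R :=
  sup [set hnorm (T x) | x in [set x : H | hnorm x <= 1]].

Definition is_proj (P : H -> H) : Prop :=
  [/\ bounded_op P,
      (forall x, P (P x) = P x) &
      (forall x y, ip (P x) y = ip x (P y))].

Definition closed_subspace (S : set H) : Prop :=
  [/\ S 0,
      (forall (a : C) x y, S x -> S y -> S (a *: x + y)) &
      (forall (u : nat -> H) l, (forall n, S (u n)) -> hconverges u l -> S l)].

(* the range of an orthogonal projection P is the closed subspace S with P = P_S *)
Definition ran (P : H -> H) : set H := [set P x | x in setT].

Definition common_complement (S T : set H) : Prop :=
  exists Z : set H, [/\ closed_subspace Z,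
    S `&` Z = [set 0], T `&` Z = [set 0],
    (forall x, exists s z, [/\ S s, Z z & x = s + z]) &
    (forall x, exists t z, [/\ T t, Z z & x = t + z])].

Definition Delta (P Q : H -> H) : Prop :=
  [/\ is_proj P, is_proj Q & common_complement (ran P) (ran Q)].

Definition open_in_proj_pairs (D : (H -> H) -> (H -> H) -> Prop) : Prop :=
  forall P Q, D P Q -> exists eps : R, 0 < eps /\
    forall P' Q', is_proj P' -> is_proj Q' ->
      opnorm (fun x => P' x - P x) < eps ->
      opnorm (fun x => Q' x - Q x) < eps -> D P' Q'.

End Hilbert.

(* Main.v *)
Require Import Defs.
From mathcomp Require Import all_boot all_order all_algebra.
From mathcomp Require Import complex.
From mathcomp Require Import boolp classical_sets reals.
From mathcomp Require Import ring lra.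
Set Implicit Arguments. Unset Strict Implicit. Unset Printing Implicit Defensive.
Import Order.TTheory GRing.Theory Num.Theory.
Local Open Scope ring_scope.
Local Open Scope classical_set_scope.

Section Basics.
Variable R : realType.
Variable H : lmodType R[i].
Variable ip : H -> H -> R[i].
Hypothesis hip : is_inner_product ip.

Local Notation nrm := (hnorm ip).
Definition rip (x y : H) : R := complex.Re (ip x y).
Definition sc (r : R) (x : H) : H := (r%:C)%C *: x.

Lemma ipD x y z : ip (x + y) z = ip x z + ip y z.
Proof. by case: hip => h _ _ _; rewrite -[x]scale1r h scale1r mul1r. Qed.

Lemma ip0 z : ip 0 z = 0.
Proof. have h := ipD 0 0 z; rewrite addr0 in h; by apply: (@addrI _ (ip 0 z)); rewrite addr0 -h. Qed.

Lemma ipZ a x z : ip (a *: x) z = a * ip x z.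
Proof. by case: hip => h _ _ _; rewrite -[a *: x]addr0 h ip0 addr0. Qed.

Lemma ripD x y z : rip (x + y) z = rip x z + rip y z.
Proof. by rewrite /rip ipD; case: (ip x z) => ? ?; case: (ip y z). Qed.

Lemma ripC x y : rip x y = rip y x.
Proof. by case: hip => _ h _ _; rewrite /rip (h y x); case: (ip y x). Qed.

Lemma ripZ r x z : rip (sc r x) z = r * rip x z.
Proof. rewrite /rip /sc ipZ; case: (ip x z) => a b /=; ring. Qed.

Lemma ripN x z : rip (- x) z = - rip x z.
Proof. by apply/eqP; rewrite -subr_eq0 opprK -ripD addNr /rip ip0. Qed.

Lemma ripB x y z : rip (x - y) z = rip x z - rip y z.
Proof. by rewrite ripD ripN. Qed.

Lemma rip_ge0 x : 0 <= rip x x.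
Proof. case: hip => _ _ h _; have := h x; rewrite lecE /rip => /andP[_]; done. Qed.

Lemma rip_eq0 x : rip x x = 0 -> x = 0.
Proof.
case: hip => _ _ h1 h2 e; apply: h2; have := h1 x; rewrite lecE => /andP[/eqP hi _].
move: e; rewrite /rip; case: (ip x x) hi => a b /= -> ->; done.
Qed.

Lemma nrm_ge0 x : 0 <= nrm x.
Proof. exact: sqrtr_ge0. Qed.

Lemma nrm_sq x : nrm x ^+ 2 = rip x x.
Proof. by rewrite /hnorm sqr_sqrtr // rip_ge0. Qed.

Lemma nrm_eq0 x : nrm x = 0 -> x = 0.
Proof. by move=> e; apply: rip_eq0; rewrite -nrm_sq e expr0n. Qed.

Lemma nrm0 : nrm 0 = 0.
Proof. by rewrite /hnorm ip0 sqrtr0. Qed.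

Lemma scD r x y : sc r (x + y) = sc r x + sc r y.
Proof. by rewrite /sc scalerDr. Qed.
Lemma scM r s x : sc (r * s) x = sc r (sc s x).
Proof. by rewrite /sc scalerA rmorphM. Qed.
Lemma sc1 x : sc 1 x = x.
Proof. by rewrite /sc rmorph1 scale1r. Qed.
Lemma sc0 x : sc 0 x = 0.
Proof. by rewrite /sc rmorph0 scale0r. Qed.
Lemma scDl r s x : sc (r + s) x = sc r x + sc s x.
Proof. by rewrite /sc rmorphD scalerDl. Qed.
Lemma scN r x : sc r (- x) = - sc r x.
Proof. by rewrite /sc scalerN. Qed.
Lemma scB r x y : sc r (x - y) = sc r x - sc r y.
Proof. by rewrite scD scN. Qed.
Lemma scx0 r : sc r 0 = 0.
Proof. by rewrite /sc scaler0. Qed.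

Lemma CS x y : rip x y <= nrm x * nrm y.
Proof.
have [->|nx] := eqVneq x 0; first by rewrite /rip ip0 nrm0 mul0r.
have [->|ny] := eqVneq y 0; first by rewrite ripC /rip ip0 nrm0 mulr0.
have px : 0 < nrm x by rewrite lt_neqAle nrm_ge0 andbT eq_sym; apply/eqP => /nrm_eq0; apply/eqP.
have py : 0 < nrm y by rewrite lt_neqAle nrm_ge0 andbT eq_sym; apply/eqP => /nrm_eq0; apply/eqP.
have := rip_ge0 (sc (nrm y) x - sc (nrm x) y).
rewrite !ripB ![rip _ (_ - _)]ripC !ripB !ripZ ![rip _ (sc _ _)]ripC !ripZ.
rewrite -!nrm_sq (ripC y x) => h.
have : 0 <= 2 * nrm x * nrm y * (nrm x * nrm y - rip x y) by nra.
rewrite pmulr_rge0 ?subr_ge0 //; nra.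
Qed.

Lemma nrm_le_sq (a b : R) : 0 <= b -> a ^+ 2 <= b ^+ 2 -> 0 <= a -> a <= b.
Proof. move=> hb h ha; nra. Qed.

Lemma nrmD x y : nrm (x + y) <= nrm x + nrm y.
Proof.
apply: nrm_le_sq; rewrite ?addr_ge0 ?nrm_ge0 //.
rewrite nrm_sq ripD ![rip _ (_ + _)]ripC !ripD -!nrm_sq (ripC x y).
have := CS y x; nra.
Qed.

Lemma nrmZ r x : nrm (sc r x) = `|r| * nrm x.
Proof.
apply/eqP; rewrite eq_le; apply/andP; split; apply: nrm_le_sq;
  rewrite ?mulr_ge0 ?normr_ge0 ?nrm_ge0 //;
  rewrite exprMn real_normK ?num_real // !nrm_sq ripZ (ripC x) ripZ; nra.
Qed.

Lemma nrmN x : nrm (- x) = nrm x.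
Proof.
have -> : - x = sc (-1) x by rewrite /sc rmorphN rmorph1 scaleN1r.
by rewrite nrmZ normrN normr1 mul1r.
Qed.

Lemma nrmB x y : nrm (x - y) = nrm (y - x).
Proof. by rewrite -nrmN opprB. Qed.

Lemma nrm_tri x y z : nrm (x - z) <= nrm (x - y) + nrm (y - z).
Proof. by have := nrmD (x - y) (y - z); rewrite addrA subrK. Qed.

Hypothesis hcomp : hcomplete ip.

Lemma pow_small (C eps : R) : 0 < eps -> exists N, forall n, (N <= n)%N -> C / 2 ^+ n < eps.
Proof.
move=> e0; exists (Num.Def.archi_bound (C / eps)) => n hn.
have h := upper_nthrootP hn.
have p2 : 0 < (2 : R) ^+ n by rewrite exprn_gt0.
rewrite ltr_pdivrMr // mulrC -ltr_pdivrMr //.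
Qed.

Lemma conv_unique u a b : hconverges ip u a -> hconverges ip u b -> a = b.
Proof.
move=> ha hb; apply/eqP; rewrite -subr_eq0; apply/eqP; apply: nrm_eq0.
apply/eqP; rewrite eq_le nrm_ge0 andbT; apply/ler_addgt0Pr => e e0.
have e2 : 0 < e / 2 by rewrite divr_gt0.
have [N1 h1] := ha _ e2; have [N2 h2] := hb _ e2.
have := h1 (maxn N1 N2) (leq_maxl _ _); have := h2 (maxn N1 N2) (leq_maxr _ _).
set x := u _ => q2 q1.
have := nrm_tri a x b; rewrite (nrmB a x) => h; lra.
Qed.

Lemma conv_add u v a b : hconverges ip u a -> hconverges ip v b ->
  hconverges ip (fun n => u n + v n) (a + b).
Proof.
move=> ha hb e e0.
have e2 : 0 < e / 2 by rewrite divr_gt0.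
have [N1 h1] := ha _ e2; have [N2 h2] := hb _ e2.
exists (maxn N1 N2) => n hn.
have q1 := h1 n (leq_trans (leq_maxl _ _) hn).
have q2 := h2 n (leq_trans (leq_maxr _ _) hn).
have -> : u n + v n - (a + b) = (u n - a) + (v n - b) by rewrite opprD addrACA.
have := nrmD (u n - a) (v n - b); lra.
Qed.

Lemma conv_ball u l c (r : R) N : hconverges ip u l ->
  (forall n, (N <= n)%N -> nrm (u n - c) <= r) -> nrm (l - c) <= r.
Proof.
move=> hl hb; apply/ler_addgt0Pr => e he.
have [N1 h1] := hl _ he.
have q1 := h1 (maxn N N1) (leq_maxr _ _).
have q2 := hb (maxn N N1) (leq_maxl _ _).
have := nrm_tri l (u (maxn N N1)) c; rewrite (nrmB l (u _)) => h; lra.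
Qed.

Lemma geo_bound (u : nat -> H) (C : R) : 0 <= C ->
  (forall k, nrm (u k.+1 - u k) <= C / 2 ^+ k) ->
  forall m d, nrm (u (m + d)%N - u m) <= 2 * C / 2 ^+ m - 2 * C / 2 ^+ (m + d).
Proof.
move=> C0 hu m; elim=> [|d IH]; first by rewrite addn0 subrr nrm0 subrr.
have := nrm_tri (u (m + d.+1)%N) (u (m + d)%N) (u m).
rewrite addnS; have := hu (m + d)%N.
have -> : 2 * C / 2 ^+ (m + d).+1 = C / 2 ^+ (m + d).
  have h2k : (2:R) ^+ (m + d) != 0 by rewrite expf_neq0 // pnatr_eq0.
  by rewrite exprS; field.
move=> h1 h2; lra.
Qed.

Lemma geo_conv (u : nat -> H) (C : R) : 0 <= C ->
  (forall k, nrm (u k.+1 - u k) <= C / 2 ^+ k) ->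
  exists l, hconverges ip u l /\ forall m, nrm (l - u m) <= 2 * C / 2 ^+ m.
Proof.
move=> C0 hu.
have hb := geo_bound C0 hu.
have hb' : forall m n, (m <= n)%N -> nrm (u n - u m) <= 2 * C / 2 ^+ m.
  move=> m n /subnKC <-; have := hb m (n - m)%N.
  have : 0 <= 2 * C / 2 ^+ (m + (n - m)) by rewrite divr_ge0 ?mulr_ge0 ?exprn_ge0.
  lra.
have [l hl] : exists l, hconverges ip u l.
  apply: hcomp => e e0.
  have e2 : 0 < e / 2 by rewrite divr_gt0.
  have [N hN] := pow_small (2 * C) e2.
  exists N => n m hn hm.
  have := nrm_tri (u n) (u N) (u m).
  have := hb' _ _ hn; have := hb' _ _ hm; rewrite (nrmB (u N) (u m)).
  have := hN N (leqnn N); lra.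
exists l; split => // m.
apply: (conv_ball (N := m) hl) => n hn; exact: (hb' m n hn).
Qed.


Lemma grp_id (V : zmodType) (a b y p1 p2 : V) : a + b + y = a + p1 + (b + p2) + (y - p1 - p2).
Proof. by rewrite -[y - p1 - p2]addrA -opprD (addrACA a p1 b p2) -(addrA (a + b)) (addrC y) addNKr. Qed.

Definition clo (A : H -> Prop) := [/\ A 0, (forall x y, A x -> A y -> A (x + y)) &
  (forall u l, (forall n, A (u n)) -> hconverges ip u l -> A l)].

Lemma conv_const y : hconverges ip (fun _ => y) y.
Proof. by move=> e e0; exists 0%N => n _; rewrite subrr nrm0. Qed.

Lemma clo_sum A (F : nat -> H) : clo A -> (forall k, A (F k)) ->
  forall n, A (\sum_(0 <= k < n) F k).
Proof.
case=> A0 AD _ hF; elim=> [|n IH]; first by rewrite big_nil.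
by rewrite big_nat_recr //=; apply: AD.
Qed.

Lemma iter_lemma A B (C : R) : clo A -> clo B -> 0 <= C ->
  (forall y, exists ab : H * H, [/\ A ab.1, B ab.2, nrm ab.1 <= C * nrm y,
       nrm ab.2 <= C * nrm y & nrm (y - ab.1 - ab.2) <= nrm y / 2]) ->
  forall y, exists a b, [/\ A a, B b, y = a + b & nrm a <= 2 * C * nrm y].
Proof.
move=> cA cB C0 hstep y.
have [f hf] := choice hstep.
pose g z := z - (f z).1 - (f z).2.
pose ys k := iter k g y.
have ysS k : ys k.+1 = g (ys k) by [].
have ny k : nrm (ys k) <= nrm y / 2 ^+ k.
  elim: k => [|k IH]; first by rewrite expr0 divr1.
  rewrite ysS; have [_ _ _ _ h] := hf (ys k).
  apply: (le_trans h); rewrite exprS invfM mulrA mulrAC.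
  by rewrite ler_pM2r ?invr_gt0 // ltr0n.
pose a n := \sum_(0 <= k < n) (f (ys k)).1.
pose b n := \sum_(0 <= k < n) (f (ys k)).2.
have Ca : 0 <= C * nrm y by rewrite mulr_ge0 ?nrm_ge0.
have ha k : nrm (a k.+1 - a k) <= C * nrm y / 2 ^+ k.
  rewrite /a big_nat_recr //= addrAC subrr add0r; have [_ _ h _ _] := hf (ys k).
  by apply: (le_trans h); rewrite -mulrA; apply: ler_wpM2l.
have hb k : nrm (b k.+1 - b k) <= C * nrm y / 2 ^+ k.
  rewrite /b big_nat_recr //= addrAC subrr add0r; have [_ _ _ h _] := hf (ys k).
  by apply: (le_trans h); rewrite -mulrA; apply: ler_wpM2l.
have [la [cla bla]] := geo_conv Ca ha.
have [lb [clb _]] := geo_conv Ca hb.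
have [_ _ Acl] := cA; have [_ _ Bcl] := cB.
exists la, lb; split.
- apply: (Acl a) => // n; apply: clo_sum => // k; by have [] := hf (ys k).
- apply: (Bcl b) => // n; apply: clo_sum => // k; by have [] := hf (ys k).
- have e n : y = a n + b n + ys n.
    elim: n => [|n IH]; first by rewrite /a /b !big_nil !add0r.
    rewrite /a /b !big_nat_recr //= -/(a n) -/(b n) {1}IH.
    exact: grp_id.
  have c0 : hconverges ip ys 0.
    move=> eps e0; have [N hN] := pow_small (nrm y) e0; exists N => n hn.
    by rewrite subr0; apply: le_lt_trans (ny n) (hN n hn).
  have := conv_add (conv_add cla clb) c0; rewrite addr0.
  have -> : (fun n => a n + b n + ys n) = (fun _ => y) by apply: funext => n; rewrite -e.
  move=> h; exact: (conv_unique (conv_const y) h).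
- by have := bla 0%N; rewrite /a big_nil subr0 expr0 divr1 mulrA.
Qed.


Lemma scN1 x : sc (-1) x = - x.
Proof. by rewrite /sc rmorphN rmorph1 scaleN1r. Qed.

Lemma baire (F : nat -> H -> Prop) :
  (forall k x, ~ F k x -> exists2 rho : R, 0 < rho & forall w, nrm (w - x) < rho -> ~ F k w) ->
  (forall x, exists k, F k x) ->
  exists k y0 (r : R), 0 < r /\ forall w, nrm (w - y0) < r -> F k w.
Proof.
move=> Fcl Fcov; apply/not_existsP => nb.
have nb' k y0 (r : R) : 0 < r -> exists w, nrm (w - y0) < r /\ ~ F k w.
  move=> r0; apply/not_existsP => hw; apply: (nb k); exists y0, r; split => // w hw'.
  by apply/not_notP => nF; apply: (hw w); split.
have step (pk : (H * R) * nat) : exists p' : H * R, 0 < pk.1.2 ->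
   [/\ 0 < p'.2, p'.2 <= pk.1.2 / 2,
       (forall w, nrm (w - p'.1) <= p'.2 -> nrm (w - pk.1.1) <= pk.1.2) &
       (forall w, nrm (w - p'.1) <= p'.2 -> ~ F pk.2 w)].
  case: pk => [[x r] k] /=.
  have [r0|r0] := ltP 0 r; last by exists (x, r) => h; exfalso; lra.
  have [w0 [hw0 nF]] := nb' k x r r0.
  have [rho rho0 hrho] := Fcl _ _ nF.
  set d := nrm (w0 - x).
  set m := Num.min rho (r - d).
  have m1 : m <= rho by rewrite ge_min lexx.
  have m2 : m <= r - d by rewrite ge_min lexx orbT.
  have m0 : 0 < m by rewrite lt_min rho0 subr_gt0.
  exists (w0, m / 2) => _ /=; split.
  - by rewrite divr_gt0.
  - by rewrite ler_pM2r ?invr_gt0 //; have := nrm_ge0 (w0 - x); rewrite -/d; lra.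
  - move=> w hw; have := nrm_tri w w0 x; rewrite -/d; lra.
  - by move=> w hw; apply: hrho; lra.
have [g hg] := choice step.
pose c := fix c n := if n is k.+1 then g (c k, k) else ((0 : H), (1 : R)).
have cS k : c k.+1 = g (c k, k) by [].
have cpos k : 0 < (c k).2.
  by elim: k => [|k IH]; [rewrite /= ltr01 | rewrite cS; have [] := hg (c k, k) IH].
have crad k : (c k).2 <= 1 / 2 ^+ k.
  elim: k => [|k IH]; first by rewrite /= expr0 divr1.
  rewrite cS; have [_ h _ _] := hg (c k, k) (cpos k); apply: (le_trans h).
  by rewrite exprS invfM mulrA mulrAC ler_pM2r ?invr_gt0 // ltr0n.
have nest j m w : nrm (w - (c (j + m)%N).1) <= (c (j + m)%N).2 -> nrm (w - (c j).1) <= (c j).2.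
  elim: m w => [|m IH] w; first by rewrite addn0.
  rewrite addnS cS => h; apply: IH; have [_ _ h2 _] := hg (c (j + m)%N, (j + m)%N) (cpos _).
  exact: h2.
have self k : nrm ((c k).1 - (c k).1) <= (c k).2 by rewrite subrr nrm0 ltW.
have hu k : nrm ((c k.+1).1 - (c k).1) <= 1 / 2 ^+ k.
  by apply: le_trans (crad k); have := nest k 1%N _ (self _); rewrite addn1.
have [l [hl _]] := geo_conv (@ler01 R) hu.
have inball j : nrm (l - (c j).1) <= (c j).2.
  apply: (conv_ball (N := j) hl) => n /subnKC <-; apply: nest; exact: self.
have [k Fk] := Fcov l.
have := inball k.+1; rewrite cS => h.
by have [_ _ _ h2] := hg (c k, k) (cpos k); apply: (h2 l h).
Qed.

Lemma grp2 (V : zmodType) (x y s1 s2 z1 z2 : V) :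
  x - (s1 - s2 + (z1 - z2)) = (y + x - (s1 + z1)) - (y - (s2 + z2)).
Proof.
rewrite [in RHS]opprB [in RHS](addrC y x) -[in RHS]addrA -[in RHS]addrA [in RHS](addrCA y).
rewrite (addrC y (_ - y)) subrK; congr (_ + _).
rewrite -[s2 + z2]opprK -opprD; congr (- _); by rewrite opprD addrACA.
Qed.


Lemma open_map (S Z : H -> Prop) : clo S -> clo Z ->
  (forall r x, S x -> S (sc r x)) -> (forall r x, Z x -> Z (sc r x)) ->
  (forall x, S x -> Z x -> x = 0) ->
  (forall x, exists s z, [/\ S s, Z z & x = s + z]) ->
  exists K : R, 0 <= K /\ forall s z, S s -> Z z -> nrm s <= K * nrm (s + z).
Proof.
move=> cS cZ SZ ZZ SZ0 SZsum.
have [S0 SD _] := cS; have [Z0 ZD _] := cZ.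
have SB x y : S x -> S y -> S (x - y) by move=> hx hy; apply: SD => //; rewrite -scN1; apply: SZ.
have ZB x y : Z x -> Z y -> Z (x - y) by move=> hx hy; apply: ZD => //; rewrite -scN1; apply: ZZ.
pose F k y := forall rho : R, 0 < rho -> exists s z, [/\ S s, Z z, nrm s <= k%:R, nrm z <= k%:R
   & nrm (y - (s + z)) < rho].
have Fcl k x : ~ F k x -> exists2 rho : R, 0 < rho & forall w, nrm (w - x) < rho -> ~ F k w.
  move=> /existsNP [rho /not_implyP [rho0 hno]].
  exists (rho / 2); first by rewrite divr_gt0.
  move=> w hw Fw; have r2 : 0 < rho / 2 by rewrite divr_gt0.
  have [s [z [hs hz h1 h2 h3]]] := Fw (rho / 2) r2.
  apply: hno; exists s, z; split => //.
  have := nrm_tri x w (s + z); rewrite (nrmB x w) => ?; lra.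
have Fcov x : exists k, F k x.
  have [s [z [hs hz ->]]] := SZsum x.
  have h0 : 0 <= nrm s + nrm z by rewrite addr_ge0 ?nrm_ge0.
  have hb := archi_boundP h0.
  exists (Num.Def.archi_bound (nrm s + nrm z)) => rho rho0; exists s, z; split => //.
  - by have := nrm_ge0 z; lra.
  - by have := nrm_ge0 s; lra.
  - by rewrite subrr nrm0.
have [k [y0 [r [r0 hball]]]] := baire Fcl Fcov.
have hc x : nrm x < r -> forall rho : R, 0 < rho -> exists s z, [/\ S s, Z z,
    nrm s <= 2 * k%:R, nrm z <= 2 * k%:R & nrm (x - (s + z)) < rho].
  move=> hx rho rho0.
  have h1 : F k (y0 + x) by apply: hball; rewrite addrAC subrr add0r.
  have h2 : F k y0 by apply: hball; rewrite subrr nrm0.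
  have rho2 : 0 < rho / 2 by rewrite divr_gt0.
  have [s1 [z1 [hs1 hz1 a1 b1 c1]]] := h1 _ rho2.
  have [s2 [z2 [hs2 hz2 a2 b2 c2]]] := h2 _ rho2.
  exists (s1 - s2), (z1 - z2); split; first exact: SB; first exact: ZB.
  - by have := nrmD s1 (- s2); rewrite nrmN; lra.
  - by have := nrmD z1 (- z2); rewrite nrmN; lra.
  - have -> : x - (s1 - s2 + (z1 - z2)) = (y0 + x - (s1 + z1)) - (y0 - (s2 + z2)).
      exact: grp2.
    by have := nrmD (y0 + x - (s1 + z1)) (- (y0 - (s2 + z2))); rewrite nrmN; lra.
pose L := 4 * k%:R / r.
have L0 : 0 <= L by rewrite /L divr_ge0 ?mulr_ge0 // ltW.
have hd y : exists ab : H * H, [/\ S ab.1, Z ab.2, nrm ab.1 <= L * nrm y,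
       nrm ab.2 <= L * nrm y & nrm (y - ab.1 - ab.2) <= nrm y / 2].
  have [->|ny] := eqVneq y 0.
    by exists (0, 0); split => //=; rewrite ?subrr ?nrm0 ?mulr0 ?mul0r.
  have py : 0 < nrm y by rewrite lt_neqAle nrm_ge0 andbT eq_sym; apply/eqP => /nrm_eq0; apply/eqP.
  pose t := r / (2 * nrm y).
  have t0 : 0 < t by rewrite /t divr_gt0 // mulr_gt0.
  have ti : t^-1 = 2 * nrm y / r by rewrite /t invf_div.
  have hx : nrm (sc t y) < r.
    rewrite nrmZ; have -> : `|t| * nrm y = r / 2 by rewrite gtr0_norm // /t; field; rewrite gt_eqF.
    lra.
  have r4 : 0 < r / 4 by rewrite divr_gt0.
  have [s' [z' [hs hz a1 b1 c1]]] := hc _ hx _ r4.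
  exists (sc t^-1 s', sc t^-1 z'); split => /=; [exact: SZ | exact: ZZ | | |].
  - have ti0 : 0 <= t^-1 by rewrite invr_ge0 ltW.
    rewrite nrmZ gtr0_norm ?invr_gt0 //; apply: (le_trans (ler_wpM2l ti0 a1)).
    by rewrite ti /L le_eqVlt; apply/orP; left; apply/eqP; field; rewrite gt_eqF.
  - have ti0 : 0 <= t^-1 by rewrite invr_ge0 ltW.
    rewrite nrmZ gtr0_norm ?invr_gt0 //; apply: (le_trans (ler_wpM2l ti0 b1)).
    by rewrite ti /L le_eqVlt; apply/orP; left; apply/eqP; field; rewrite gt_eqF.
  - have ti0 : 0 <= t^-1 by rewrite invr_ge0 ltW.
    have -> : y - sc t^-1 s' - sc t^-1 z' = sc t^-1 (sc t y - (s' + z')).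
      by rewrite scB -scM mulVf ?gt_eqF // sc1 scD opprD addrA.
    rewrite nrmZ gtr0_norm ?invr_gt0 //; apply: (le_trans (ler_wpM2l ti0 (ltW c1))).
    by rewrite ti le_eqVlt; apply/orP; left; apply/eqP; field; rewrite gt_eqF.
have hit := iter_lemma cS cZ L0 hd.
exists (2 * L); split; first by rewrite mulr_ge0.
move=> s z hs hz; have [a [b [ha hb e hn]]] := hit (s + z).
suff E : s = a by rewrite {1}E.
apply/eqP; rewrite -subr_eq0; apply/eqP; apply: SZ0; first exact: SB.
have -> : s - a = b - z.
  by apply/eqP; rewrite subr_eq addrAC (addrC b) -e addrK.
exact: ZB.
Qed.

Section Proj.
Variable P : H -> H.
Hypothesis hP : is_proj ip P.

Lemma PL a x y : P (a *: x + y) = a *: P x + P y.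
Proof. by case: hP => [[h _] _ _]. Qed.
Lemma P0 : P 0 = 0.
Proof.
have := PL 1 0 0; rewrite !scale1r addr0 => h.
by apply: (@addrI _ (P 0)); rewrite addr0 -h.
Qed.
Lemma PD x y : P (x + y) = P x + P y.
Proof. by rewrite -[x]scale1r PL !scale1r. Qed.
Lemma PZ r x : P (sc r x) = sc r (P x).
Proof. by rewrite /sc -[_ *: x]addr0 PL P0 addr0. Qed.
Lemma PN x : P (- x) = - P x.
Proof. by rewrite -!scN1 PZ. Qed.
Lemma PB x y : P (x - y) = P x - P y.
Proof. by rewrite PD PN. Qed.
Lemma PP x : P (P x) = P x.
Proof. by case: hP. Qed.

Lemma Pbnd : exists M : R, 0 <= M /\ forall x, nrm (P x) <= M * nrm x.
Proof.
case: hP => [[_ [M hM]] _ _]; exists `|M|; split => // x.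
apply: (le_trans (hM x)); rewrite ler_wpM2r ?nrm_ge0 //; exact: ler_norm.
Qed.

Lemma ranE y : ran P y <-> P y = y.
Proof. by split => [[x _ <-]|h]; [rewrite PP | exists y]. Qed.

Lemma P_conv u l : hconverges ip u l -> hconverges ip (fun n => P (u n)) (P l).
Proof.
have [M [M0 hM]] := Pbnd => hl e e0.
have e1 : 0 < e / (M + 1) by rewrite divr_gt0 // ltr_wpDl.
have [N hN] := hl _ e1; exists N => n hn.
rewrite -PB; have h1 := hM (u n - l); have h2 := hN n hn.
have hq : e / (M + 1) * (M + 1) = e by field; rewrite gt_eqF // ltr_wpDl.
set q := e / (M + 1) in e1 h2 hq; set a := nrm (u n - l) in h1 h2.
have a0 : 0 <= a by exact: nrm_ge0.
nra.
Qed.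

Lemma ran_clo : clo (ran P).
Proof.
split.
- by apply/ranE; rewrite P0.
- by move=> x y /ranE hx /ranE hy; apply/ranE; rewrite PD hx hy.
- move=> u l hu hl; apply/ranE.
  have hu' : (fun n => P (u n)) = u by apply: funext => n; apply/ranE.
  have := P_conv hl; rewrite hu' => h; exact: (conv_unique h hl).
Qed.

Lemma ran_sc r x : ran P x -> ran P (sc r x).
Proof. by move=> /ranE h; apply/ranE; rewrite PZ h. Qed.

End Proj.

Lemma opnorm_bound P1 P2 : is_proj ip P1 -> is_proj ip P2 ->
  forall x, nrm (P1 x - P2 x) <= opnorm ip (fun x => P1 x - P2 x) * nrm x.
Proof.
move=> h1 h2 x.
have [M1 [M10 hM1]] := Pbnd h1; have [M2 [M20 hM2]] := Pbnd h2.
pose T y := P1 y - P2 y.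
have Tb y : nrm (T y) <= (M1 + M2) * nrm y.
  have := nrmD (P1 y) (- P2 y); rewrite nrmN mulrDl; have := hM1 y; have := hM2 y.
  rewrite /T; lra.
have hs : has_sup [set nrm (T y) | y in [set y : H | nrm y <= 1]].
  split; first by exists (nrm (T 0)), 0 => //=; rewrite nrm0 ler01.
  exists (M1 + M2) => v [y /= hy <-].
  apply: (le_trans (Tb y)); rewrite -[leRHS]mulr1 ler_wpM2l // addr_ge0 //.
rewrite /opnorm -/T.
have [->|nx] := eqVneq x 0.
  by rewrite /T (P0 h1) (P0 h2) subrr nrm0 mulr0.
have px : 0 < nrm x by rewrite lt_neqAle nrm_ge0 andbT eq_sym; apply/eqP => /nrm_eq0; apply/eqP.
pose x' := sc (nrm x)^-1 x.
have nx' : nrm x' = 1 by rewrite nrmZ gtr0_norm ?invr_gt0 // mulVf // gt_eqF.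
have hE : [set nrm (T y) | y in [set y : H | nrm y <= 1]] (nrm (T x')).
  by exists x' => //=; rewrite nx'.
have hle := sup_upper_bound hs hE.
have eT : T x' = sc (nrm x)^-1 (T x) by rewrite /T /x' (PZ h1) (PZ h2) scB.
rewrite eT nrmZ gtr0_norm ?invr_gt0 // mulrC ler_pdivrMr // in hle.
Qed.

Lemma side P P' (Z : H -> Prop) (K d : R) : is_proj ip P -> is_proj ip P' ->
  clo Z -> (forall r x, Z x -> Z (sc r x)) -> 0 <= K -> 0 <= d ->
  (forall s z, ran P s -> Z z -> nrm s <= K * nrm (s + z)) ->
  (forall x, exists s z, [/\ ran P s, Z z & x = s + z]) ->
  (K + 1) * d <= 1 / 2 ->
  (forall x, nrm (P' x - P x) <= d * nrm x) ->
  ran P' `&` Z = [set 0] /\ (forall x, exists t z, [/\ ran P' t, Z z & x = t + z]).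
Proof.
move=> hP hP' cZ ZZ K0 d0 hK hsum hKd hd.
have [Z0 ZD _] := cZ.
split.
  apply/seteqP; split => y /=; last by move=> ->; split => //; apply/(ranE hP'); rewrite (P0 hP').
  case=> /(ranE hP') hy hz.
  have hz' : Z (- y) by rewrite -scN1; apply: ZZ.
  have h1 := hK (P y) (- y) (proj2 (ranE hP _) (PP hP y)) hz'.
  have h2 := hd y; rewrite hy in h2.
  have h3 := nrm_tri y (P y) 0.
  rewrite !subr0 in h3; rewrite (nrmB (P y) y) in h1.
  have h4 : nrm y <= 0.
    have n0 := nrm_ge0 y.
    set a := nrm y in h2 h3 n0 *; set b := nrm (y - P y) in h1 h2 h3; set c := nrm (P y) in h1 h3.
    have e1 : K * b <= K * (d * a) by apply: ler_wpM2l.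
    have e2 : (K + 1) * d * a <= 1 / 2 * a by apply: ler_wpM2r.
    nra.
  by apply: nrm_eq0; apply/eqP; rewrite eq_le h4 nrm_ge0.
move=> x.
have cA := ran_clo hP'.
have K1 : 0 <= K + 1 by rewrite addr_ge0.
have hstep y : exists ab : H * H, [/\ ran P' ab.1, Z ab.2, nrm ab.1 <= (K + 1) * nrm y,
       nrm ab.2 <= (K + 1) * nrm y & nrm (y - ab.1 - ab.2) <= nrm y / 2].
  have [s [z [hs hz ey]]] := hsum y; subst y.
  have hKs := hK s z hs hz.
  have hds := hd s; rewrite (proj1 (ranE hP s) hs) in hds.
  set Y := nrm (s + z) in hKs *.
  have Y0 : 0 <= Y by exact: nrm_ge0.
  have ns0 := nrm_ge0 s.
  have e1 : d * nrm s <= d * (K * Y) by apply: ler_wpM2l.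
  have e2 : (K + 1) * d * Y <= 1 / 2 * Y by apply: ler_wpM2r.
  exists (P' s, z); split => /=.
  - by apply/(ranE hP'); rewrite (PP hP').
  - done.
  - have := nrm_tri (P' s) s 0; rewrite !subr0 => h; nra.
  - have -> : z = s + z - s by rewrite addrAC subrr add0r.
    have := nrmD (s + z) (- s); rewrite nrmN -/Y => h; nra.
  - rewrite addrAC addrK (nrmB s); nra.
have [a [b [ha hb e _]]] := iter_lemma cA cZ K1 hstep x.
by exists a, b.
Qed.
End Basics.

Theorem mainTheorem3 (R : realType) (H : lmodType R[i]) (ip : H -> H -> R[i]) :
  separable_inf_dim_hilbert ip ->
  open_in_proj_pairs ip (Delta ip).
Proof.
case=> hip hcomp _ _ P Q [hP hQ [Z [cZ eSZ eTZ sS sT]]].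
case: cZ => Z0 Zlin Zlim.
have cloZ : clo ip Z.
  split => // x y hx hy; rewrite -[x]scale1r; exact: Zlin.
have ZZ r x : Z x -> Z (sc r x).
  by move=> hx; rewrite /sc -[_ *: x]addr0; apply: Zlin.
have inter (A : H -> Prop) : A `&` Z = [set 0] -> forall x, A x -> Z x -> x = 0.
  by move=> e x ha hz; have : (A `&` Z) x by []; rewrite e.
have [KP [KP0 hKP]] := open_map hip hcomp (ran_clo hip hP) cloZ (ran_sc hP) ZZ (inter _ eSZ) sS.
have [KQ [KQ0 hKQ]] := open_map hip hcomp (ran_clo hip hQ) cloZ (ran_sc hQ) ZZ (inter _ eTZ) sT.
pose eps := 1 / (2 * (KP + KQ + 1)).
have D0 : 0 < KP + KQ + 1 by rewrite ltr_wpDl // addr_ge0.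
have e0 : 0 < eps by rewrite /eps divr_gt0 // mulr_gt0.
have heps : (KP + KQ + 1) * eps = 1 / 2 by rewrite /eps; field; rewrite gt_eqF.
exists eps; split => // P' Q' hP' hQ' nP nQ.
have dP x : hnorm ip (P' x - P x) <= eps * hnorm ip x.
  apply: (le_trans (opnorm_bound hip hP' hP x)); apply: ler_wpM2r; [exact: nrm_ge0 | exact: ltW].
have dQ x : hnorm ip (Q' x - Q x) <= eps * hnorm ip x.
  apply: (le_trans (opnorm_bound hip hQ' hQ x)); apply: ler_wpM2r; [exact: nrm_ge0 | exact: ltW].
have cP : (KP + 1) * eps <= 1 / 2 by rewrite -heps ler_pM2r //; lra.
have cQ : (KQ + 1) * eps <= 1 / 2 by rewrite -heps ler_pM2r //; lra.
have [iP sP] := side hip hcomp hP hP' cloZ ZZ KP0 (ltW e0) hKP sS cP dP.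
have [iQ sQ] := side hip hcomp hQ hQ' cloZ ZZ KQ0 (ltW e0) hKQ sT cQ dQ.
split => //; exists Z; split => //.
Qed.
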